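(* Let $q$ be a prime power with $q\equiv 1\pmod 4$ and $5\mid(q-1)$, and let $n=1+\frac{q-1}{5}$. Then $C_5+C_n:=\{\alpha+\beta:\alpha\in C_5,\beta\in C_n\}\neq\mathbb{F}_q$. In fact, $|C_5+C_n|\le q-1$.
   Context: For a prime power $q$ and an integer $k>1$, an element $a\in\mathbb{F}_q$ is called a $k$-potent if $a^k=a$, and $C_k$ denotes the set of all $k$-potents in $\mathbb{F}_q$. *)

(* Defs.v *)
From HB Require Import structures.
From mathcomp Require Import all_boot all_order all_algebra all_field.
Set Implicit Arguments. Unset Strict Implicit. Unset Printing Implicit Defensive.
Import GRing.Theory.
Local Open Scope ring_scope.

Definition kpotents (F : finFieldType) (k : nat) : {set F} :=
  [set a : F | a ^+ k == a].

Definition sumset (F : finFieldType) (A B : {set F}) : {set F} :=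
  [set a + b | a in A, b in B].

(* Main.v *)
Require Import Defs.
From HB Require Import structures.
From mathcomp Require Import all_boot all_order all_algebra all_field.
From mathcomp Require Import zify ring.
Import GRing.Theory.
Local Open Scope ring_scope.

Lemma card_roots_le (F : finFieldType) (A : {set F}) (k : nat) :
  (0 < k)%N -> (forall x, x \in A -> x ^+ k = 1) -> (#|A| <= k)%N.
Proof.
move=> k0 H; rewrite cardE; apply: max_unity_roots => //; last exact: enum_uniq.
by apply/allP => x; rewrite mem_enum => /H xk; rewrite unity_rootE xk.
Qed.

Lemma unit_pow (F : finFieldType) (b : F) k : b != 0 -> b ^+ k.+1 = b -> b ^+ k = 1.
Proof.
move=> b0 h; apply: (mulfI b0); by rewrite mulr1 -exprS h.
Qed.

Lemma aux (T : finType) (S : {set T}) : (1 < #|T|)%N -> S = [set: T] -> ~ (#|S| <= #|T| - 1)%N.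
Proof. move=> q1 -> ; rewrite cardsT; lia. Qed.

Lemma key (F : finFieldType) (m k : nat) : m = (4 * k)%N -> (0 < m)%N ->
  (#|sumset (kpotents F 5) (kpotents F m.+1)| <= 5 * m)%N.
Proof.
move=> hk m1.
set n := m.+1.
have hn : n = m.+1 by [].
set C5 := kpotents F 5; set Cn := kpotents F n.
set A := C5 :\ 0; set B := (Cn :\ 0) :\ 1.
have inCn : forall x : F, (x \in Cn) = (x ^+ m.+1 == x).
  by move=> x; rewrite /Cn /kpotents inE hn.
have A4 : forall a, a \in A -> a ^+ 4 = 1.
  move=> a; rewrite !inE => /andP [a0 /eqP a5]; exact: unit_pow.
have Am : forall a, a \in A -> a ^+ m = 1.
  by move=> a /A4 h; rewrite hk exprM h expr1n.
have sub : (sumset C5 Cn \subset Cn :|: [set a * (1 - c) | a in A, c in B])%R.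
  apply/subsetP => x /imset2P [a b ha hb ->].
  have hb' := hb; rewrite inCn in hb'.
  have [->|a0] := eqVneq a 0; first by rewrite add0r inE hb.
  have aA : a \in A by rewrite in_setD1 a0 ha.
  have [->|b0] := eqVneq b 0.
    by rewrite addr0 in_setU inCn exprS Am // mulr1 eqxx.
  have [ab|ab] := eqVneq (a + b) 0.
    by rewrite ab in_setU inCn expr0n eqxx.
  rewrite in_setU; apply/orP; right.
  have bm : b ^+ m = 1 by apply: unit_pow => //; exact/eqP.
  apply/imset2P; exists a (- b / a) => //.
    have cm : (- b / a) ^+ m = 1.
      rewrite expr_div_n exprNn bm (Am a aA) divr1 mulr1 hk exprM.
      by rewrite -signr_odd /= expr0 expr1n.
    rewrite !in_setD1 inCn exprS cm mulr1 eqxx andbT.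
    rewrite mulf_neq0 ?oppr_eq0 ?invr_eq0 // andbT.
    apply/negP => /eqP h; move: ab; rewrite -[b]opprK.
    have -> : - b = a by rewrite -[RHS]mul1r -h mulfVK.
    by rewrite subrr eqxx.
  by field.
have cA : (#|A| <= 4)%N by apply: card_roots_le.
have cCn : (#|Cn| <= m.+1)%N.
  rewrite (cardsD1 (0%R:F)); have : (#|Cn :\ (0%R:F)| <= m)%N.
    apply: card_roots_le => // x; rewrite in_setD1 inCn => /andP [x0 /eqP].
    exact: unit_pow.
  by case: (0 \in Cn) => /=; lia.
have cB : (#|B| <= m - 1)%N.
  have : (#|Cn :\ (0%R:F)| <= m)%N.
    apply: card_roots_le => // x; rewrite in_setD1 inCn => /andP [x0 /eqP].
    exact: unit_pow.
  have -> : #|Cn :\ (0%R:F)| = (1 + #|B|)%N.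
    by rewrite (cardsD1 (1%R:F) (Cn :\ (0%R:F))) in_setD1 inCn expr1n oner_neq0 eqxx.
  lia.
suff cS : (#|sumset C5 Cn| <= 5 * m)%N.
  by [].
  apply: leq_trans (subset_leq_card sub) _.
  apply: leq_trans (leq_card_setU _ _) _.
  rewrite curry_imset2X.
  apply: leq_trans (leq_add cCn (leq_trans (leq_imset_card _ _) _)) _.
    exact: (leqnn _).
  rewrite cardsX.
  have := leq_mul cA cB; move: (#|A| * #|B|)%N => t; lia.
Qed.

Local Close Scope ring_scope.
Theorem mainTheorem4 (F : finFieldType) :
  #|F| %% 4 = 1 -> 5 %| (#|F| - 1) ->
  let n := 1 + (#|F| - 1) %/ 5 in
  sumset (kpotents F 5) (kpotents F n) != [set: F] /\
  #|sumset (kpotents F 5) (kpotents F n)| <= #|F| - 1.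
Proof.
move=> hq4 h5 n.
set m := ((#|F| - 1) %/ 5)%N.
have q1 : (1 < #|F|)%N by exact: finNzRing_gt1.
have qm : (#|F| - 1 = 5 * m)%N by rewrite /m mulnC divnK.
have [k hk] : exists k, m = (4 * k)%N.
  exists (m %/ 4)%N.
  have : (m %% 4 = 0)%N by lia.
  move=> h; rewrite {1}(divn_eq m 4) h addn0 mulnC //.
have m1 : (0 < m)%N by lia.
have hn : n = m.+1 by rewrite /n /m add1n.
have cS : (#|sumset (kpotents F 5) (kpotents F n)| <= #|F| - 1)%N.
  by rewrite hn qm; exact: (@key F m k hk m1).
split=> //.
apply/negP => /eqP E.
have e : #|sumset (kpotents F 5) (kpotents F n)| = #|F| by rewrite E; apply: eq_card => x; rewrite !inE.
move: cS q1; rewrite e; lia.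
Qed.
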